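(* Let $d,r\ge2$. The map $\mathbb M_{d,r}\to\mathcal M_{d,r}$ sending $(\mathbf u,\mathbf w)$ to the element whose $i$-th chart representative is $\varphi_i(\mathbf u,\mathbf w)$ is well defined and bijective (each $\varphi_i$ is a bijection $\mathbb M_{d,r}\to M^{(i)}_{d,r}$ and $\mu_{i,i+1}\circ\varphi_i=\varphi_{i+1}$). Under this identification, $(\mathbf a,\mathbf b)\mapsto f_{\mathbf a,\mathbf b}$ is a bijection from $T_{d,r}$ onto $\mathrm{Sp}(\mathcal M_{d,r})$, restricting for each $i\in[r]$ to a bijection from $T_{d,r}(i)$ onto $\mathrm{Sp}(\mathcal M_{d,r},i)$. In particular $\mathcal M_{d,r}$ is full.
   Context: A polyptych lattice over $\mathbb Z$: lattices $\{M_\alpha\}_{\alpha\in I}$ of rank $n$ with piecewise linear maps (continuous, linear on the cones of a complete rational fan) $\mu_{\alpha,\beta}$, $\mu_{\alpha,\alpha}=\mathrm{id}$, $\mu_{\alpha,\beta}=\mu_{\beta,\alpha}^{-1}$, $\mu_{\beta,\gamma}\mu_{\alpha,\beta}=\mu_{\alpha,\gamma}$; elements are classes of $\bigsqcup M_\alpha$ under $m\sim\mu_{\alpha,\beta}(m)$, with chart maps $\pi_\alpha$; $m+_\alpha m'=\pi_\alpha^{-1}(\pi_\alpha m+\pi_\alpha m')$; $\lambda m=\pi_\alpha^{-1}(\lambda\pi_\alpha m)$. A point is $p:\mathcal M\to\mathbb Z$ with $p(m)+p(m')=\min_\alpha p(m+_\alpha m')$ and $p(\lambda m)=\lambda p(m)$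 ($\lambda\in\mathbb Z_{\ge0}$); $\mathrm{Sp}(\mathcal M)$ is the set of points, $\mathrm{Sp}(\mathcal M,\alpha)$ those with $p\circ\pi_\alpha^{-1}$ linear; $\mathcal M$ is full if $\mathrm{Sp}(\mathcal M)=\bigcup_\alpha\mathrm{Sp}(\mathcal M,\alpha)$. The polyptych lattice $\mathcal M_{d,r}$ (rank $d+r-1$): coordinates $(\mathbf u,\mathbf w)\in\mathbb Z^d\times\mathbb Z^r$; charts $M^{(i)}_{d,r}=\{(\mathbf u,\mathbf w):w_i=0\}$ for $i\in[r]$; mutations $\mu_{i,i+1}(\mathbf u,\mathbf w)=(\mathbf u,w_1,\dots,w_{i-1},\min\{u_1,\dots,u_d\}-\sum_kw_k,0,w_{i+2},\dots,w_r)$ for $i\in[r-1]$, with all other $\mu_{i,j}$ obtained by composition and inversion. Let $\mathbf 1=(1,\dots,1)\in\mathbb Z^d$, $\langle\cdot,\cdot\rangle$ the standard pairing, $\varepsilon_i$ standard basis vectors. $\mathbb M_{d,r}=\{(\mathbf u,\mathbf w)\in\mathbb Z^d\times\mathbb Z^r:\min_ju_j=0\}$. $\varphi_i:\mathbb M_{d,r}\to M^{(i)}_{d,r}$, $\varphi_i(\mathbf u,\mathbf w)=\pi_i(\mathbf u+\langle\mathbf 1,\mathbf w\rangle\mathbf 1,\mathbf w)$ where $\pi_i$ sets the $i$-th $\mathbf w$-coordinate to $0$ (its inverse is $(\mathbf u,\mathbf w)\mapsto(\mathbf u-\min(\mathbf u)\mathbf 1,\mathbf w+(\min(\mathbf u)-\langle\mathbf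 1,\mathbf w\rangle)\varepsilon_i)$). $T_{d,r}=\{(\mathbf a,\mathbf b)\in\mathbb Z^d\times\mathbb Z^r:a_1+\cdots+a_d=\min\{b_1,\dots,b_r\}\}$, $T_{d,r}(i)=\{(\mathbf a,\mathbf b)\in T_{d,r}:a_1+\cdots+a_d=b_i\}$. For $(\mathbf a,\mathbf b)\in T_{d,r}$, $f_{\mathbf a,\mathbf b}:\mathbb M_{d,r}\to\mathbb Z$, $f_{\mathbf a,\mathbf b}(\mathbf u,\mathbf w)=\langle\mathbf a,\mathbf u\rangle+\langle\mathbf b,\mathbf w\rangle$. *)

(* Defs.v *)
From HB Require Import structures.
From mathcomp Require Import all_boot all_order all_algebra.
From Stdlib Require Import Relations.Relation_Operators ClassicalEpsilon.
Set Implicit Arguments. Unset Strict Implicit. Unset Printing Implicit Defensive.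
Import Order.TTheory GRing.Theory Num.Theory.
Local Open Scope ring_scope.

(* Minimum of finitely many integers (0 for an empty family; only used
   for nonempty families, since d, r >= 2). *)
Definition minf (n : nat) (f : 'I_n -> int) : int :=
  match [seq f j | j <- enum 'I_n] with
  | [::] => 0
  | x :: s => foldr Num.min x s
  end.

(* Ambient coordinates (u, w) in Z^d x Z^r; index [r] = {1..r} is 'I_r. *)
Definition V (d r : nat) := ({ffun 'I_d -> int} * {ffun 'I_r -> int})%type.

Definition vzero d r : V d r := ([ffun => 0], [ffun => 0]).
Definition vadd d r (x y : V d r) : V d r :=
  ([ffun j => x.1 j + y.1 j], [ffun k => x.2 k + y.2 k]).
Definition vscale d r (l : nat) (x : V d r) : V d r :=
  ([ffun j => l%:Z * x.1 j], [ffun k => l%:Z * x.2 k]).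

Definition in_chart d r (i : 'I_r) (x : V d r) : bool := x.2 i == 0.
Definition chartproj d r (i : 'I_r) (x : V d r) : V d r :=
  (x.1, [ffun k => if k == i then 0 else x.2 k]).

(* mutation mu_{i,i+1} (0-based i, defined when i.+1 < r) *)
Definition mu_adj d r (i : nat) (x : V d r) : V d r :=
  (x.1, [ffun k : 'I_r =>
          if (k == i :> nat) then minf x.1 - \sum_l x.2 l
          else if (k == i.+1 :> nat) then 0 else x.2 k]).

(* generating relation of ~ on the disjoint union of the charts:
   m ~ mu_{i,i+1}(m) for m in M^(i); the equivalence it generates is the one
   generated by all mu_{alpha,beta} (obtained by composition/inversion). *)
Definition step d r (z z' : 'I_r * V d r) : Prop :=
  (z'.1 = z.1.+1 :> nat) /\ in_chart z.1 z.2 /\ z'.2 = mu_adj z.1 z.2.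

Definition cls d r (z : 'I_r * V d r) : 'I_r * V d r -> Prop :=
  fun z' => clos_refl_sym_trans _ (@step d r) z z'.

Definition is_class d r (C : 'I_r * V d r -> Prop) : Prop :=
  exists i x, in_chart i x /\ C = cls (i, x).

Definition Melt (d r : nat) := {C : 'I_r * V d r -> Prop | is_class C}.

Lemma cls_is_class d r (i : 'I_r) (x : V d r) :
  is_class (cls (i, chartproj i x)).
Proof.
exists i, (chartproj i x); split => //.
by rewrite /in_chart /chartproj /= ffunE eqxx.
Qed.

Definition liftM d r (i : 'I_r) (x : V d r) : Melt d r :=
  exist _ (cls (i, chartproj i x)) (cls_is_class i x).

Definition piM d r (i : 'I_r) (m : Melt d r) : V d r :=
  epsilon (inhabits (vzero d r))
    (fun x => in_chart i x /\ proj1_sig m (i, x)).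

Definition addM d r (i : 'I_r) (m m' : Melt d r) : Melt d r :=
  liftM i (vadd (piM i m) (piM i m')).
Definition scaleM d r (i : 'I_r) (l : nat) (m : Melt d r) : Melt d r :=
  liftM i (vscale l (piM i m)).

Definition is_point d r (p : Melt d r -> int) : Prop :=
  (forall m m' : Melt d r, p m + p m' = minf (fun i => p (addM i m m'))) /\
  (forall (i : 'I_r) (l : nat) (m : Melt d r), p (scaleM i l m) = l%:Z * p m).

Definition is_point_at d r (i : 'I_r) (p : Melt d r -> int) : Prop :=
  is_point p /\
  forall x y : V d r, in_chart i x -> in_chart i y ->
    p (liftM i (vadd x y)) = p (liftM i x) + p (liftM i y).

Definition inMM d r (x : V d r) : bool := minf x.1 == 0.

Definition phi d r (i : 'I_r) (x : V d r) : V d r :=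
  ([ffun j => x.1 j + \sum_k x.2 k], [ffun k => if k == i then 0 else x.2 k]).

Definition iotaM d r (i : 'I_r) (y : V d r) : Melt d r := liftM i (phi i y).

Definition inT d r (ab : V d r) : bool := \sum_j ab.1 j == minf ab.2.
Definition inTi d r (i : 'I_r) (ab : V d r) : bool :=
  inT ab && (\sum_j ab.1 j == ab.2 i).
Definition fab d r (ab : V d r) (x : V d r) : int :=
  \sum_j ab.1 j * x.1 j + \sum_k ab.2 k * x.2 k.

(* Main.v *)
Require Import Defs.
From mathcomp Require Import all_boot all_order all_algebra.
From mathcomp Require Import ring zify.
From Stdlib Require Import ClassicalEpsilon ProofIrrelevance FunctionalExtensionality PropExtensionality Relations.Relation_Operators.
Set Implicit Arguments. Unset Strict Implicit. Unset Printing Implicit Defensive.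
Import Order.TTheory GRing.Theory Num.Theory.
Local Open Scope ring_scope.


Lemma foldr_min_le (x : int) s y : y \in x :: s -> foldr Num.min x s <= y.
Proof.
elim: s y => [|z s IH] y /=; first by rewrite inE => /eqP ->.
rewrite !inE => /orP[/eqP->|/orP[/eqP->|hy]].
- by rewrite ge_min IH ?orbT // inE eqxx.
- by rewrite ge_min lexx.
- by rewrite ge_min IH ?orbT // inE hy orbT.
Qed.

Lemma foldr_min_in (x : int) s : foldr Num.min x s \in x :: s.
Proof.
elim: s => [|z s IH] /=; first by rewrite inE.
rewrite !inE; case: (leP z (foldr Num.min x s)) => _.
  by rewrite eqxx orbT.
by move: IH; rewrite inE => /orP[->|->]; rewrite ?orbT.
Qed.

Lemma minf_le n (f : 'I_n -> int) j : minf f <= f j.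
Proof.
rewrite /minf; have : f j \in [seq f j | j <- enum 'I_n] by rewrite map_f ?mem_enum.
case: [seq _ | _ <- _] => [//|x s]; exact: foldr_min_le.
Qed.

Lemma minf_ex n (f : 'I_n -> int) : (0 < n)%N -> exists j, minf f = f j.
Proof.
move=> n0; rewrite /minf.
have : Ordinal n0 \in enum 'I_n by rewrite mem_enum.
have := @foldr_min_in.
case E: [seq f j | j <- enum 'I_n] => [|x s].
  by move: E; case: (enum 'I_n).
move=> /(_ x s); rewrite -E => /mapP[j _ ->] _; by exists j.
Qed.

Lemma minf_eq n (f : 'I_n -> int) m j0 : f j0 = m -> (forall j, m <= f j) -> minf f = m.
Proof.
move=> h0 hle; apply/le_anti; rewrite -{1}h0 minf_le /=.
have [k ->] := minf_ex f (leq_ltn_trans (leq0n j0) (ltn_ord j0)); exact: hle.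
Qed.

Lemma minf_ext n (f g : 'I_n -> int) : f =1 g -> minf f = minf g.
Proof. by move=> e; rewrite /minf (eq_map e). Qed.

Lemma minfD n (f : 'I_n -> int) c : (0 < n)%N -> minf (fun j => f j + c) = minf f + c.
Proof.
move=> n0; have [k hk] := minf_ex f n0.
apply: (minf_eq (j0 := k)); first by rewrite hk.
by move=> j; rewrite lerD2r minf_le.
Qed.

Lemma minfM n (f : 'I_n -> int) c : (0 < n)%N -> 0 <= c -> minf (fun j => c * f j) = c * minf f.
Proof.
move=> n0 c0; have [k hk] := minf_ex f n0.
apply: (minf_eq (j0 := k)); first by rewrite hk.
by move=> j; rewrite ler_wpM2l // minf_le.
Qed.

Lemma minf_cst n c (j0 : 'I_n) : minf (fun _ : 'I_n => c) = c.
Proof. by apply: (minf_eq (j0 := j0)). Qed.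


Definition psi d r (i : 'I_r) (x : V d r) : V d r :=
  ([ffun j => x.1 j - minf x.1],
   [ffun k => if k == i then minf x.1 - \sum_l x.2 l else x.2 k]).

Lemma sum_proj r (w : {ffun 'I_r -> int}) (i : 'I_r) :
  \sum_k (if k == i then 0 else w k) = \sum_k w k - w i.
Proof.
rewrite (bigD1 i) //= eqxx add0r [in RHS](bigD1 i) //= addrAC subrr add0r.
by apply: eq_bigr => k /negbTE ->.
Qed.

Lemma sum_projf r (w : {ffun 'I_r -> int}) (i : 'I_r) :
  \sum_k [ffun k => if k == i then 0 else w k] k = \sum_k w k - w i.
Proof. by rewrite -sum_proj; apply: eq_bigr => k _; rewrite ffunE. Qed.

Lemma inMM_ge0 d r (y : V d r) : inMM y -> forall j, 0 <= y.1 j.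
Proof. by move=> /eqP h j; rewrite -h minf_le. Qed.

Lemma minf_phi d r (i : 'I_r) (y : V d r) : (0 < d)%N -> inMM y ->
  minf (phi i y).1 = \sum_k y.2 k.
Proof.
move=> d0 /eqP h; rewrite /phi /=.
rewrite (minf_ext (g := fun j => y.1 j + \sum_k y.2 k)); last by move=> j; rewrite ffunE.
by rewrite minfD // h add0r.
Qed.

Lemma phiK d r (i : 'I_r) (y : V d r) : (0 < d)%N -> inMM y -> psi i (phi i y) = y.
Proof.
move=> d0 hy; rewrite /psi minf_phi //; case: y hy => u w hy.
rewrite /phi /=; congr (_, _); apply/ffunP => j; rewrite !ffunE.
  by rewrite addrK.
by rewrite sum_projf; case: eqP => [->|//]; ring.
Qed.

Lemma psi_MM d r (i : 'I_r) (x : V d r) : (0 < d)%N -> inMM (psi i x).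
Proof.
move=> d0; rewrite /inMM /psi /=.
rewrite (minf_ext (g := fun j => x.1 j + - minf x.1)); last by move=> j; rewrite ffunE.
by rewrite minfD // subrr.
Qed.

Lemma sum_psi d r (i : 'I_r) (x : V d r) : in_chart i x ->
  \sum_k (psi i x).2 k = minf x.1.
Proof.
move=> /eqP hx; rewrite /psi /=.
under eq_bigr => k _ do rewrite ffunE.
rewrite (bigD1 i) //= eqxx.
rewrite (bigD1 i (P := xpredT)) //= hx add0r.
rewrite [X in _ + X](eq_bigr (fun k => x.2 k)); last by move=> k /negbTE ->.
by rewrite subrK.
Qed.

Lemma psiK d r (i : 'I_r) (x : V d r) : in_chart i x -> phi i (psi i x) = x.
Proof.
move=> hx; rewrite /phi sum_psi //; case: x hx => u w hx.
congr (_, _); apply/ffunP => j; rewrite !ffunE /=.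
  by rewrite subrK.
by case: eqP => [->|//]; move/eqP: hx.
Qed.

Lemma phi_chart d r (i : 'I_r) (y : V d r) : in_chart i (phi i y).
Proof. by rewrite /in_chart /phi /= ffunE eqxx. Qed.

Lemma mu_phi d r (i j : 'I_r) (y : V d r) : (0 < d)%N -> (j = i.+1 :> nat) -> inMM y ->
  mu_adj i (phi i y) = phi j y.
Proof.
move=> d0 hj hy; rewrite /mu_adj minf_phi //.
congr (_, _); apply/ffunP => k; rewrite !ffunE.
rewrite sum_projf.
have hji : (j == i) = false by apply/negbTE; apply/eqP => e; move: hj; rewrite e; lia.
case: (eqVneq (k : nat) i) => [hk|hk].
  have -> : k = i by apply: val_inj.
  by rewrite eq_sym hji; ring.
have -> : (k == i) = false by apply/negbTE; apply: contra hk => /eqP ->.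
case: (eqVneq (k : nat) i.+1) => [hk2|hk2].
  have e : k = j by apply: val_inj; rewrite /= hk2 hj.
  by rewrite e eqxx.
have e : (k == j) = false.
  by apply/negbTE; apply: contra hk2 => /eqP ->; rewrite hj.
by rewrite e.
Qed.


Definition K d r (y : V d r) : 'I_r * V d r -> Prop :=
  fun z => in_chart z.1 z.2 /\ psi z.1 z.2 = y.

Lemma step_inv d r (z z' : 'I_r * V d r) : (0 < d)%N -> step z z' ->
  in_chart z'.1 z'.2 /\ psi z'.1 z'.2 = psi z.1 z.2.
Proof.
move=> d0; case: z z' => i x [j x'] [/= hj [hc ->]].
rewrite -{1 2}(psiK hc) (mu_phi (j := j)) ?psi_MM //.
by rewrite phi_chart phiK ?psi_MM.
Qed.

Lemma cls_sub d r (i : 'I_r) (x : V d r) z : (0 < d)%N -> in_chart i x ->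
  cls (i, x) z -> K (psi i x) z.
Proof.
move=> d0 hc; rewrite /cls.
suff : forall z1 z2, clos_refl_sym_trans _ (@step d r) z1 z2 ->
  z1 = z2 \/ (K (psi z1.1 z1.2) z1 /\ K (psi z1.1 z1.2) z2).
  move=> H /H [<-|[_ h]] //.
move=> z1 z2; elim => {z1 z2}.
- move=> z1 z2 hs; right; have [h1 h2] := step_inv d0 hs.
  by split; split => //; move: hs => [_ []].
- by move=> z1; left.
- move=> z1 z2 _ [->|[[h1 h2] [h3 h4]]]; first by left.
  by right; rewrite h4; split; split.
- move=> z1 z2 z3 _ [<-|[[h1 h2] [h3 h4]]] _ [<-|[[h5 h6] [h7 h8]]].
  + by left.
  + by right; split; split.
  + by right; split; split.
  + by right; split; split => //; rewrite h8 h4.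
Qed.

Lemma reach d r (y : V d r) (i j : 'I_r) : (0 < d)%N -> inMM y ->
  cls (i, phi i y) (j, phi j y).
Proof.
move=> d0 hy.
have r0 : (0 < r)%N by case: (i) => /= ? h; apply: leq_ltn_trans h.
pose o0 := Ordinal r0.
suff H : forall n (hn : (n < r)%N), cls (o0, phi o0 y) (Ordinal hn, phi (Ordinal hn) y).
  have Hk : forall k : 'I_r, cls (o0, phi o0 y) (k, phi k y).
    move=> k; have := H k (ltn_ord k).
    have e : Ordinal (ltn_ord k) = k by apply: val_inj.
    by rewrite e.
  exact: rst_trans (rst_sym _ _ _ _ (Hk i)) (Hk j).
elim=> [|n IH] hn.
  have e : Ordinal hn = o0 by apply: val_inj.
  by rewrite e; apply: rst_refl.
have hn' : (n < r)%N by apply: ltnW.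
apply: rst_trans (IH hn') _; apply: rst_step.
split; first by [].
split; first exact: phi_chart.
by symmetry; apply: (mu_phi (i := Ordinal hn')).
Qed.

Lemma cls_eq d r (i : 'I_r) (x : V d r) : (0 < d)%N -> in_chart i x ->
  cls (i, x) = K (psi i x).
Proof.
move=> d0 hc; apply: functional_extensionality => z.
apply: propositional_extensionality; split; first exact: cls_sub.
case: z => j x' [/= hc' he].
rewrite -(psiK hc') -[x in cls (i, x)](psiK hc) he.
apply: reach => //; exact: psi_MM.
Qed.

Lemma melt_eq d r (m m' : Melt d r) : proj1_sig m = proj1_sig m' -> m = m'.
Proof.
case: m m' => C hC [C' hC'] /= e; subst C'.
by rewrite (proof_irrelevance _ hC hC').
Qed.

Lemma chartproj_id d r (i : 'I_r) (x : V d r) : in_chart i x -> chartproj i x = x.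
Proof.
move=> /eqP h; case: x h => u w /= h; congr (_, _); apply/ffunP => k; rewrite ffunE.
by case: eqP => // ->.
Qed.

Lemma lift_val d r (i : 'I_r) (x : V d r) : (0 < d)%N -> in_chart i x ->
  proj1_sig (liftM i x) = K (psi i x).
Proof. by move=> d0 hc; rewrite /= chartproj_id // cls_eq. Qed.

Lemma iota_val d r (i : 'I_r) (y : V d r) : (0 < d)%N -> inMM y ->
  proj1_sig (iotaM i y) = K y.
Proof. by move=> d0 hy; rewrite /iotaM lift_val ?phi_chart // phiK. Qed.

Lemma lift_iota d r (i j : 'I_r) (x : V d r) : (0 < d)%N -> in_chart i x ->
  liftM i x = iotaM j (psi i x).
Proof. by move=> d0 hc; apply: melt_eq; rewrite lift_val // iota_val // psi_MM. Qed.

Lemma iota_indep d r (i j : 'I_r) (y : V d r) : (0 < d)%N -> inMM y ->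
  iotaM i y = iotaM j y.
Proof. by move=> d0 hy; apply: melt_eq; rewrite !iota_val. Qed.

Lemma piM_iota d r (i j : 'I_r) (y : V d r) : (0 < d)%N -> inMM y ->
  piM j (iotaM i y) = phi j y.
Proof.
move=> d0 hy; rewrite /piM iota_val //.
set P := fun x => _.
have ex : exists x, P x by exists (phi j y); rewrite /P /K /= phi_chart phiK.
have [h1 [_ h2]] := epsilon_spec (inhabits (vzero d r)) P ex.
by rewrite -(psiK h1) h2.
Qed.

Lemma iota_inj d r (i : 'I_r) (y y' : V d r) : (0 < d)%N -> inMM y -> inMM y' ->
  iotaM i y = iotaM i y' -> y = y'.
Proof.
move=> d0 hy hy' /(congr1 (@proj1_sig _ _)); rewrite !iota_val // => e.
have : K y (i, phi i y) by rewrite /K /= phi_chart phiK.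
by rewrite e => -[_ /=]; rewrite phiK.
Qed.

Lemma iota_surj d r (i : 'I_r) (m : Melt d r) : (0 < d)%N ->
  exists2 y, inMM y & iotaM i y = m.
Proof.
move=> d0; case: m => C hC; have [j [x [hc e]]] := hC.
exists (psi j x); first exact: psi_MM.
by apply: melt_eq; rewrite iota_val ?psi_MM //= e cls_eq.
Qed.


Definition corr d r (c : int) (i : 'I_r) : V d r :=
  ([ffun => - c], [ffun k => if k == i then c else 0]).
Arguments corr {d r}.

Definition cmin d r (y y' : V d r) : int := minf (fun j => y.1 j + y'.1 j).

Lemma psi_add d r (i : 'I_r) (y y' : V d r) : (0 < d)%N -> inMM y -> inMM y' ->
  psi i (vadd (phi i y) (phi i y')) = vadd (vadd y y') (corr (cmin y y') i).
Proof.
move=> d0 hy hy'.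
have hm : minf (vadd (phi i y) (phi i y')).1 = cmin y y' + (\sum_k y.2 k + \sum_k y'.2 k).
  rewrite /cmin -minfD //; apply: minf_ext => j; rewrite /vadd /phi /= !ffunE; ring.
have hs : \sum_l (vadd (phi i y) (phi i y')).2 l =
   (\sum_k y.2 k - y.2 i) + (\sum_k y'.2 k - y'.2 i).
  rewrite -!sum_proj -big_split /=; apply: eq_bigr => k _.
  by rewrite /vadd /phi /= !ffunE; case: (k == i); rewrite ?addr0.
rewrite /psi hm hs; congr (_, _); apply/ffunP => j; rewrite !ffunE /=.
  ring.
case: eqP => [->|_]; first by ring.
by rewrite addr0.
Qed.

Lemma fab_add d r (ab x y : V d r) : fab ab (vadd x y) = fab ab x + fab ab y.
Proof.
rewrite /fab /vadd /=.
under eq_bigr => j _ do rewrite ffunE mulrDr.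
under [X in _ + X]eq_bigr => k _ do rewrite ffunE mulrDr.
rewrite !big_split /=; ring.
Qed.

Lemma fab_corr d r (ab : V d r) c (i : 'I_r) :
  fab ab (corr c i) = c * (ab.2 i - \sum_j ab.1 j).
Proof.
rewrite /fab /corr /=.
under eq_bigr => j _ do rewrite ffunE mulrN mulrC.
under [X in _ + X]eq_bigr => k _ do rewrite ffunE.
have -> : \sum_(k < r) ab.2 k * (if k == i then c else 0) = ab.2 i * c.
  rewrite (bigD1 i) //= eqxx big1 ?addr0 // => k /negbTE ->; by rewrite mulr0.
rewrite sumrN -mulr_sumr; ring.
Qed.

Lemma fab_scale d r (ab y : V d r) (l : nat) : fab ab (vscale l y) = l%:Z * fab ab y.
Proof.
rewrite /fab /vscale /= mulrDr !mulr_sumr.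
by congr (_ + _); apply: eq_bigr => j _; rewrite ffunE mulrCA.
Qed.

Lemma fab_addMM d r (i : 'I_r) (ab y y' : V d r) : (0 < d)%N -> inMM y -> inMM y' ->
  fab ab (psi i (vadd (phi i y) (phi i y'))) =
  fab ab y + fab ab y' + cmin y y' * (ab.2 i - \sum_j ab.1 j).
Proof. by move=> d0 hy hy'; rewrite psi_add // !fab_add fab_corr. Qed.

Lemma cmin_ge0 d r (y y' : V d r) : (0 < d)%N -> inMM y -> inMM y' -> 0 <= cmin y y'.
Proof.
move=> d0 hy hy'; rewrite /cmin; have [j ->] := minf_ex (fun j => y.1 j + y'.1 j) d0.
by rewrite addr_ge0 // inMM_ge0.
Qed.

Lemma psi_scale d r (i : 'I_r) (y : V d r) (l : nat) : (0 < d)%N -> inMM y ->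
  psi i (vscale l (phi i y)) = vscale l y.
Proof.
move=> d0 hy.
have hm : minf (vscale l (phi i y)).1 = l%:Z * \sum_k y.2 k.
  rewrite -(minf_phi i d0 hy) -minfM //; apply: minf_ext => j; by rewrite ffunE.
have hs : \sum_l0 (vscale l (phi i y)).2 l0 = l%:Z * (\sum_k y.2 k - y.2 i).
  rewrite -sum_proj mulr_sumr; apply: eq_bigr => k _.
  by rewrite /vscale /phi /= !ffunE; case: (k == i); rewrite ?mulr0.
rewrite /psi hm hs; congr (_, _); apply/ffunP => j; rewrite !ffunE /=.
  ring.
case: eqP => [->|_]; first by ring.
by [].
Qed.

Lemma addM_iota d r (i j k : 'I_r) (y y' : V d r) : (0 < d)%N -> inMM y -> inMM y' ->
  addM i (iotaM j y) (iotaM k y') = iotaM i (psi i (vadd (phi i y) (phi i y'))).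
Proof.
move=> d0 hy hy'; rewrite /addM !piM_iota // (@lift_iota _ _ i i) //.
by rewrite /in_chart /vadd /= ffunE (eqP (phi_chart i y)) (eqP (phi_chart i y')).
Qed.

Lemma scaleM_iota d r (i j : 'I_r) (l : nat) (y : V d r) : (0 < d)%N -> inMM y ->
  scaleM i l (iotaM j y) = iotaM i (vscale l y).
Proof.
move=> d0 hy; rewrite /scaleM piM_iota // (@lift_iota _ _ i i) ?psi_scale //.
by rewrite /in_chart /vscale /= ffunE (eqP (phi_chart i y)) mulr0.
Qed.

Lemma scale_MM d r (l : nat) (y : V d r) : (0 < d)%N -> inMM y -> inMM (vscale l y).
Proof.
move=> d0 hy; have r0 : (0 < r)%N \/ (r = 0)%N by case: r y hy => [|r'] ?; [right|left].
rewrite /inMM /vscale /=.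
rewrite (minf_ext (g := fun j => l%:Z * y.1 j)); last by move=> j; rewrite ffunE.
by rewrite minfM // (eqP hy) mulr0.
Qed.


Definition sing n (k : 'I_n) (s : int) : {ffun 'I_n -> int} :=
  [ffun j => if j == k then s else 0].
Definition zf n : {ffun 'I_n -> int} := [ffun => 0].
Arguments zf {n}.

Lemma ffun_ind n (P : {ffun 'I_n -> int} -> Prop) :
  P zf ->
  (forall (w : {ffun 'I_n -> int}) (k : 'I_n), w k = 0 -> P w -> forall s, P [ffun j => if j == k then s else w j]) ->
  forall w, P w.
Proof.
move=> P0 PS.
suff H : forall m (w : {ffun 'I_n -> int}), (forall j : 'I_n, (m <= j)%N -> w j = 0) -> P w.
  by move=> w; apply: (H n) => j; rewrite leqNgt ltn_ord.
elim=> [|m IH] w hw.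
  have -> : w = zf by apply/ffunP => j; rewrite ffunE hw.
  exact: P0.
case: (ltnP m n) => hm; last first.
  by apply: IH => j hj; have := ltn_ord j; lia.
pose k := Ordinal hm.
pose w' := [ffun j => if j == k then 0 else w j].
have hw' : P w'.
  apply: IH => j hj; rewrite ffunE; case: eqP => // /eqP hjk.
  apply: hw; have : (j : nat) != m by apply: contra hjk => /eqP e; apply/eqP/val_inj.
  lia.
have := PS w' k; rewrite ffunE eqxx => /(_ erefl hw' (w k)).
suff -> : [ffun j => if j == k then w k else w' j] = w by [].
by apply/ffunP => j; rewrite !ffunE; case: eqP => [->|].
Qed.

Lemma minf0 n (f : 'I_n -> int) j0 : (forall j, 0 <= f j) -> f j0 = 0 -> minf f = 0.
Proof. by move=> h h0; apply: (minf_eq (j0 := j0)). Qed.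

Lemma vadd_corr0 d r (x : V d r) (i : 'I_r) : vadd x (corr 0 i) = x.
Proof.
case: x => u w; rewrite /vadd /corr /=; congr (_, _); apply/ffunP => j; rewrite !ffunE.
  by rewrite oppr0 addr0.
by case: eqP; rewrite addr0.
Qed.

Lemma add_MM d r (i : 'I_r) (y y' : V d r) : (0 < d)%N -> inMM y -> inMM y' ->
  inMM (vadd (vadd y y') (corr (cmin y y') i)).
Proof. by move=> d0 hy hy'; rewrite -(psi_add i) //; exact: psi_MM. Qed.


Lemma pt_add d r (p : Melt d r -> int) (i0 : 'I_r) (y y' : V d r) :
  (0 < d)%N -> is_point p -> inMM y -> inMM y' -> cmin y y' = 0 ->
  p (iotaM i0 (vadd y y')) = p (iotaM i0 y) + p (iotaM i0 y').
Proof.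
move=> d0 [hp _] hy hy' hc.
have hM : inMM (vadd y y') by have := add_MM i0 d0 hy hy'; rewrite hc vadd_corr0.
rewrite hp (minf_ext (g := fun _ => p (iotaM i0 (vadd y y')))).
  by rewrite (minf_cst _ i0).
move=> i; rewrite addM_iota // psi_add // hc vadd_corr0.
by rewrite (iota_indep i i0).
Qed.

Lemma pt_scale d r (p : Melt d r -> int) (i0 : 'I_r) (y : V d r) (l : nat) :
  (0 < d)%N -> is_point p -> inMM y ->
  p (iotaM i0 (vscale l y)) = l%:Z * p (iotaM i0 y).
Proof. by move=> d0 [_ hp] hy; rewrite -(scaleM_iota i0 i0) // hp. Qed.


Lemma sum_sing n (c : 'I_n -> int) (k : 'I_n) s : \sum_j c j * sing k s j = c k * s.
Proof.
rewrite (bigD1 k) //= ffunE eqxx big1 ?addr0 // => j /negbTE hj.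
by rewrite ffunE hj mulr0.
Qed.

Lemma MM_u d r (u : {ffun 'I_d -> int}) (w : {ffun 'I_r -> int}) j0 :
  (forall j, 0 <= u j) -> u j0 = 0 -> inMM ((u, w) : V d r).
Proof. by move=> h h0; rewrite /inMM /= (minf0 h h0). Qed.
Arguments MM_u {d r u w} j0.

Lemma MM_w d r (w : {ffun 'I_r -> int}) : (0 < d)%N -> inMM ((zf, w) : V d r).
Proof. by move=> d0; apply: (MM_u (Ordinal d0)) => [j|]; rewrite ffunE. Qed.

Lemma g_zero d r (p : Melt d r -> int) (i0 : 'I_r) : (0 < d)%N -> is_point p ->
  p (iotaM i0 (zf, zf)) = 0.
Proof.
move=> d0 hp.
have -> : ((zf, zf) : V d r) = vscale 0 (zf, zf).
  by congr (_, _); apply/ffunP => j; rewrite !ffunE mul0r.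
by rewrite pt_scale // ?mul0r // MM_w.
Qed.

Lemma cmin_w d r (w w' : {ffun 'I_r -> int}) : (0 < d)%N ->
  cmin ((zf, w) : V d r) (zf, w') = 0.
Proof. by move=> d0; apply: (minf0 (j0 := Ordinal d0)) => [j|]; rewrite /= !ffunE. Qed.

Lemma g_sing_w d r (p : Melt d r -> int) (i0 k : 'I_r) s : (0 < d)%N -> is_point p ->
  p (iotaM i0 (zf, sing k s)) = s * p (iotaM i0 (zf, sing k 1)).
Proof.
move=> d0 hp.
have Pos : forall n : nat, p (iotaM i0 (zf, sing k n)) = n%:Z * p (iotaM i0 (zf, sing k 1)).
  move=> n; rewrite -pt_scale ?MM_w //; congr (p (iotaM _ (_, _))); apply/ffunP => j;
    rewrite !ffunE ?mulr0 //.
  by case: eqP; rewrite ?mulr1 ?mulr0.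
case: s => n; first exact: Pos.
rewrite NegzE.
have := pt_add i0 d0 hp (MM_w (sing k (- n.+1%:Z)) d0) (MM_w (sing k (n.+1%:Z)) d0) (cmin_w _ _ d0).
have -> : vadd ((zf, sing k (- n.+1%:Z)) : V d r) (zf, sing k n.+1%:Z) = (zf, zf).
  congr (_, _); apply/ffunP => j; rewrite !ffunE ?addr0 //.
  by case: eqP; rewrite ?addr0 // addNr.
rewrite g_zero // Pos => e.
by rewrite mulNr; apply/eqP; rewrite -addr_eq0 e.
Qed.

Lemma g_w d r (p : Melt d r -> int) (i0 : 'I_r) (w : {ffun 'I_r -> int}) :
  (0 < d)%N -> is_point p ->
  p (iotaM i0 (zf, w)) = \sum_k p (iotaM i0 (zf, sing k 1)) * w k.
Proof.
move=> d0 hp; elim/ffun_ind: w.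
  by rewrite g_zero // big1 // => k _; rewrite ffunE mulr0.
move=> w k hk IH s.
have -> : [ffun j => if j == k then s else w j] = [ffun j => w j + sing k s j].
  by apply/ffunP => j; rewrite !ffunE; case: eqP => [->|]; rewrite ?hk ?add0r ?addr0.
have -> : ((zf, [ffun j => w j + sing k s j]) : V d r) = vadd (zf, w) (zf, sing k s).
  by congr (_, _); apply/ffunP => j; rewrite !ffunE ?addr0.
rewrite pt_add ?MM_w ?cmin_w // IH g_sing_w //.
under [RHS]eq_bigr => j _ do rewrite ffunE mulrDr.
by rewrite big_split /= sum_sing mulrC.
Qed.

Lemma g_u d r (p : Melt d r -> int) (i0 : 'I_r) (u : {ffun 'I_d -> int}) j0 :
  is_point p -> (forall j, 0 <= u j) -> u j0 = 0 ->
  p (iotaM i0 (u, zf)) = \sum_j p (iotaM i0 (sing j 1, zf)) * u j.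
Proof.
have d0 : (0 < d)%N by case: (j0) => /= ? h; apply: leq_ltn_trans h.
move=> hp; elim/ffun_ind: u.
  by move=> _ _; rewrite g_zero // big1 // => k _; rewrite ffunE mulr0.
move=> w k hk IH s hnn h0.
have hw : forall j, 0 <= w j.
  move=> j; have := hnn j; rewrite ffunE; case: eqP => [->|//]; by rewrite hk.
case: (eqVneq k j0) => [ekj|nkj].
  have es : s = 0 by move: h0; rewrite ffunE ekj eqxx.
  have -> : [ffun j => if j == k then s else w j] = w.
    by apply/ffunP => j; rewrite ffunE; case: eqP => [->|]; rewrite ?es ?hk.
  by apply: IH => //; rewrite -ekj.
have wj0 : w j0 = 0 by move: h0; rewrite ffunE eq_sym (negbTE nkj).
have s0 : 0 <= s by have := hnn k; rewrite ffunE eqxx.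
have -> : [ffun j => if j == k then s else w j] = [ffun j => w j + sing k s j].
  by apply/ffunP => j; rewrite !ffunE; case: eqP => [->|]; rewrite ?hk ?add0r ?addr0.
have -> : (([ffun j => w j + sing k s j], zf) : V d r) = vadd (w, zf) (sing k s, zf).
  by congr (_, _); apply/ffunP => j; rewrite !ffunE ?addr0.
have hsing : forall j, 0 <= sing k s j by move=> j; rewrite ffunE; case: eqP.
have sj0 : sing k s j0 = 0 by rewrite ffunE eq_sym (negbTE nkj).
rewrite pt_add //; first last.
- apply: (minf0 (j0 := j0)) => [j|] /=; first by rewrite addr_ge0.
  by rewrite wj0 sj0.
- exact: (MM_u j0).
- exact: (MM_u j0).
rewrite IH //.
have -> : p (iotaM i0 (sing k s, zf)) = s * p (iotaM i0 (sing k 1, zf)).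
  case: s s0 {hnn h0 hsing sj0} => // n _.
  rewrite -pt_scale //; last by apply: (MM_u j0) => [j|]; rewrite ffunE;
    [case: eqP|rewrite eq_sym (negbTE nkj)].
  congr (p (iotaM _ (_, _))); apply/ffunP => j; rewrite !ffunE ?mulr0 //.
  by case: eqP; rewrite ?mulr1 ?mulr0.
under [RHS]eq_bigr => j _ do rewrite ffunE mulrDr.
by rewrite big_split /= sum_sing mulrC.
Qed.


Lemma pt_fab_cond d r (ab y y' : V d r) : (0 < d)%N -> (0 < r)%N -> inMM y -> inMM y' ->
  minf (fun i => fab ab (psi i (vadd (phi i y) (phi i y')))) =
  fab ab y + fab ab y' + cmin y y' * (minf ab.2 - \sum_j ab.1 j).
Proof.
move=> d0 r0 hy hy'.
rewrite (minf_ext (g := fun i => cmin y y' * ab.2 i +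
   (fab ab y + fab ab y' - cmin y y' * \sum_j ab.1 j))).
  rewrite minfD // minfM ?cmin_ge0 //; ring.
by move=> i; rewrite fab_addMM //; ring.
Qed.

Definition abof d r (p : Melt d r -> int) (i0 : 'I_r) : V d r :=
  ([ffun j => p (iotaM i0 (sing j 1, zf))], [ffun k => p (iotaM i0 (zf, sing k 1))]).

Lemma g_full d r (p : Melt d r -> int) (i0 : 'I_r) (y : V d r) :
  (0 < d)%N -> is_point p -> inMM y -> p (iotaM i0 y) = fab (abof p i0) y.
Proof.
move=> d0 hp hy; have [j0 hj0] := minf_ex y.1 d0.
have u0 : y.1 j0 = 0 by rewrite -hj0 (eqP hy).
have hnn := inMM_ge0 hy.
case: y hy hj0 u0 hnn => u w hy hj0 u0 hnn /=.
have e : ((u, w) : V d r) = vadd (u, zf) (zf, w).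
  by congr (_, _); apply/ffunP => j; rewrite !ffunE ?addr0 ?add0r.
have hc : cmin ((u, zf) : V d r) (zf, w) = 0.
  by apply: (minf0 (j0 := j0)) => [j|] /=; rewrite ffunE addr0.
rewrite {1}e pt_add ?(MM_w w d0) //.
rewrite (g_u i0 hp hnn u0) g_w // /fab /=.
by congr (_ + _); apply: eq_bigr => j _; rewrite ffunE.
Qed.

Lemma pt_repr d r (p : Melt d r -> int) : (1 < d)%N -> (0 < r)%N -> is_point p ->
  exists2 ab : V d r, inT ab &
    forall (i : 'I_r) (y : V d r), inMM y -> p (iotaM i y) = fab ab y.
Proof.
move=> d1 r0 hp; have d0 : (0 < d)%N by apply: ltnW.
pose i0 := Ordinal r0.
have hall : forall (i : 'I_r) (y : V d r), inMM y -> p (iotaM i y) = fab (abof p i0) y.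
  by move=> i y hy; rewrite (iota_indep i i0) // g_full.
exists (abof p i0) => //.
pose j1 := Ordinal d0; pose j2 := Ordinal d1.
have j12 : j2 != j1 by [].
pose y1 : V d r := (sing j1 1, zf).
pose y2 : V d r := ([ffun j => if j == j1 then 0 else 1], zf).
have hy1 : inMM y1.
  by apply: (MM_u j2) => [j|]; rewrite ffunE; [by case: eqP | by rewrite (negbTE j12)].
have hy2 : inMM y2.
  by apply: (MM_u j1) => [j|]; rewrite ffunE; [by case: eqP | by rewrite eqxx].
have hc : cmin y1 y2 = 1.
  apply: (minf_eq (j0 := j1)) => [|j]; rewrite /= !ffunE ?eqxx //.
  by case: eqP.
have := hp.1 (iotaM i0 y1) (iotaM i0 y2).
rewrite (minf_ext (g := fun i => fab (abof p i0) (psi i (vadd (phi i y1) (phi i y2))))).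
  rewrite pt_fab_cond // hc mul1r !hall // => /eqP.
  rewrite -subr_eq0 => /eqP e.
  rewrite /inT; apply/eqP.
  by move/eqP: e; rewrite opprD addrA subrr add0r oppr_eq0 subr_eq0 => /eqP ->.
move=> i; rewrite addM_iota // hall //; exact: psi_MM.
Qed.

Lemma repr_pt d r (p : Melt d r -> int) (ab : V d r) : (0 < d)%N -> (0 < r)%N -> inT ab ->
  (forall (i : 'I_r) (y : V d r), inMM y -> p (iotaM i y) = fab ab y) -> is_point p.
Proof.
move=> d0 r0 hT hrep; pose i0 := Ordinal r0; split.
  move=> m m'; have [y hy <-] := iota_surj i0 m d0; have [y' hy' <-] := iota_surj i0 m' d0.
  rewrite (minf_ext (g := fun i => fab ab (psi i (vadd (phi i y) (phi i y'))))).
    by rewrite pt_fab_cond // (eqP hT) subrr mulr0 addr0 !hrep.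
  by move=> i; rewrite addM_iota // hrep // psi_MM.
move=> i l m; have [y hy <-] := iota_surj i0 m d0.
by rewrite scaleM_iota // !hrep ?scale_MM // fab_scale.
Qed.

Lemma fab_inj d r (ab ab' : V d r) : (1 < d)%N ->
  (forall y : V d r, inMM y -> fab ab y = fab ab' y) -> ab = ab'.
Proof.
move=> d1 h; have d0 : (0 < d)%N by apply: ltnW.
have ev1 : forall (c : V d r) j, fab c (sing j 1, zf) = c.1 j.
  move=> c j; rewrite /fab /= sum_sing mulr1 big1 ?addr0 // => k _; by rewrite ffunE mulr0.
have ev2 : forall (c : V d r) k, fab c (zf, sing k 1) = c.2 k.
  move=> c k; rewrite /fab /= sum_sing mulr1 big1 ?add0r // => j _; by rewrite ffunE mulr0.
case: ab ab' h ev1 ev2 => a b [a' b'] h ev1 ev2.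
congr (_, _); apply/ffunP => j.
  have hM : inMM ((sing j 1, zf) : V d r).
    have [j2 hj2] : exists j2 : 'I_d, j2 != j.
      case: (eqVneq j (Ordinal d0)) => [->|hj]; first by exists (Ordinal d1).
      by exists (Ordinal d0); rewrite eq_sym.
    by apply: (MM_u j2) => [k|]; rewrite ffunE; [by case: eqP | by rewrite (negbTE hj2)].
  by have := h _ hM; rewrite !ev1.
by have := h _ (MM_w (sing j 1) d0); rewrite !ev2.
Qed.

Lemma sp_iff d r (i : 'I_r) (p : Melt d r -> int) (ab : V d r) : (1 < d)%N -> (0 < r)%N ->
  inT ab -> (forall (j : 'I_r) (y : V d r), inMM y -> p (iotaM j y) = fab ab y) ->
  (is_point_at i p <-> inTi i ab).
Proof.
move=> d1 r0 hT hrep; have d0 : (0 < d)%N by apply: ltnW.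
have key : forall y y' : V d r, inMM y -> inMM y' ->
    p (liftM i (vadd (phi i y) (phi i y'))) =
    fab ab y + fab ab y' + cmin y y' * (ab.2 i - \sum_j ab.1 j).
  move=> y y' hy hy'; rewrite (@lift_iota _ _ i i) ?hrep ?fab_addMM ?psi_MM //.
  by rewrite /in_chart /vadd /= ffunE (eqP (phi_chart i y)) (eqP (phi_chart i y')).
have lift1 : forall y : V d r, inMM y -> p (liftM i (phi i y)) = fab ab y.
  by move=> y hy; rewrite (@lift_iota _ _ i i) ?phi_chart // phiK // hrep.
split.
  move=> [hp hlin].
  pose j1 := Ordinal d0; pose j2 := Ordinal d1.
  have j12 : j2 != j1 by [].
  pose y1 : V d r := (sing j1 1, zf).
  pose y2 : V d r := ([ffun j => if j == j1 then 0 else 1], zf).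
  have hy1 : inMM y1.
    by apply: (MM_u j2) => [j|]; rewrite ffunE; [by case: eqP | by rewrite (negbTE j12)].
  have hy2 : inMM y2.
    by apply: (MM_u j1) => [j|]; rewrite ffunE; [by case: eqP | by rewrite eqxx].
  have hc : cmin y1 y2 = 1.
    apply: (minf_eq (j0 := j1)) => [|j]; rewrite /= !ffunE ?eqxx //.
    by case: eqP.
  have := hlin _ _ (phi_chart i y1) (phi_chart i y2).
  rewrite key // !lift1 // hc mul1r => /eqP; rewrite -subr_eq0.
  rewrite addrAC subrr add0r subr_eq0 => /eqP e.
  by rewrite /inTi hT /= e eqxx.
move=> /andP[_ /eqP hi]; split; first exact: (repr_pt d0 r0 hT hrep).
move=> x x' hx hx'.
rewrite -(psiK hx) -(psiK hx') key ?psi_MM // !lift1 ?psi_MM // hi subrr mulr0 addr0.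
by [].
Qed.

Lemma full_pt d r (p : Melt d r -> int) : (1 < d)%N -> (0 < r)%N -> is_point p ->
  exists i : 'I_r, is_point_at i p.
Proof.
move=> d1 r0 hp; have [ab hT hrep] := pt_repr d1 r0 hp.
have [i hi] := minf_ex ab.2 r0.
exists i; apply/(sp_iff i d1 r0 hT hrep).
by rewrite /inTi hT /= (eqP hT) hi.
Qed.

Unset Implicit Arguments.

Theorem mainTheorem16 (d r : nat) (hd : (2 <= d)%N) (hr : (2 <= r)%N) :
  (forall i : 'I_r,
     (forall y : V d r, inMM y -> in_chart i (phi i y)) /\
     {in [pred y : V d r | inMM y] &, injective (phi i)} /\
     (forall x : V d r, in_chart i x -> exists2 y, inMM y & phi i y = x)) /\
  (forall (i j : 'I_r), (j = i.+1 :> nat) ->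
     forall y : V d r, inMM y -> mu_adj i (phi i y) = phi j y) /\
  (forall (i j : 'I_r) (y : V d r), inMM y ->
     iotaM i y = iotaM j y /\ piM j (iotaM i y) = phi j y) /\
  (forall i : 'I_r,
     {in [pred y : V d r | inMM y] &, injective (iotaM i)} /\
     (forall m : Melt d r, exists2 y, inMM y & iotaM i y = m)) /\
  (forall p : Melt d r -> int,
     is_point p <->
     exists2 ab : V d r, inT ab &
       forall (i : 'I_r) (y : V d r), inMM y -> p (iotaM i y) = fab ab y) /\
  (forall ab ab' : V d r, inT ab -> inT ab' ->
     (forall y : V d r, inMM y -> fab ab y = fab ab' y) -> ab = ab') /\
  (forall (i : 'I_r) (p : Melt d r -> int) (ab : V d r), inT ab ->
     (forall (j : 'I_r) (y : V d r), inMM y -> p (iotaM j y) = fab ab y) ->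
     (is_point_at i p <-> inTi i ab)) /\
  (forall p : Melt d r -> int, is_point p -> exists i : 'I_r, is_point_at i p).
Proof.
have d1 : (1 < d)%N by [].
have d0 : (0 < d)%N by apply: ltnW.
have r0 : (0 < r)%N by apply: ltnW.
split.
  move=> i; split; first by move=> y _; exact: phi_chart.
  split.
    move=> y y' hy hy' e.
    by rewrite -(phiK i d0 hy) -(phiK i d0 hy') e.
  move=> x hx; exists (psi i x); [exact: psi_MM | exact: psiK].
split; first by move=> i j y hj hy; exact: mu_phi.
split; first by move=> i j y hy; split; [exact: iota_indep | exact: piM_iota].
split.
  move=> i; split; last by move=> m; exact: iota_surj.
  by move=> y y' hy hy'; exact: iota_inj.
split.
  move=> p; split; first exact: pt_repr.
  by move=> [ab hT hrep]; exact: (repr_pt d0 r0 hT hrep).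
split; first by move=> ab ab' _ _; exact: fab_inj.
split; first by move=> i p ab hT hrep; exact: sp_iff.
by move=> p hp; exact: full_pt.
Qed.
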